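(* Let $r\ge 2$, let $Z$ be a set with $|Z|=m\ge 2r+1$, and let $A\subseteq Z$ with $|A|\in\{r-1,r\}$. Let $\mathcal{B}$ be the $r$-uniform family $\mathcal{B}=\{B\subseteq Z: |B|=r,\ 0<|B\cap A|<|A|\}$. Then $\mathcal{B}$ is non-separable.
   Context: Two families $\mathcal{A}_1,\mathcal{A}_2$ are cross-intersecting if $A_1\cap A_2\neq\emptyset$ for all $A_1\in\mathcal{A}_1$, $A_2\in\mathcal{A}_2$. A family $\mathcal{A}$ is non-separable if for every partition $\mathcal{A}=\mathcal{A}_1\cup\mathcal{A}_2$ (disjoint union) with $(\mathcal{A}_1,\mathcal{A}_2)$ cross-intersecting, we have $\mathcal{A}_1=\emptyset$ or $\mathcal{A}_2=\emptyset$. *)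

(* Defs.v *)
From mathcomp Require Import all_boot.
Set Implicit Arguments. Unset Strict Implicit. Unset Printing Implicit Defensive.

Definition cross_intersecting (T : finType) (F1 F2 : {set {set T}}) : Prop :=
  forall A1 A2, A1 \in F1 -> A2 \in F2 -> A1 :&: A2 != set0.

Definition non_separable (T : finType) (F : {set {set T}}) : Prop :=
  forall F1 F2 : {set {set T}},
    F1 :|: F2 = F -> F1 :&: F2 = set0 -> cross_intersecting F1 F2 ->
    F1 = set0 \/ F2 = set0.

(* Main.v *)
Require Import Defs.
From mathcomp Require Import all_boot.
From mathcomp Require Import zify.
Set Implicit Arguments. Unset Strict Implicit. Unset Printing Implicit Defensive.

Definition fam (T : finType) (r : nat) (A : {set T}) :=
  [set B : {set T} | (#|B| == r) && (0 < #|B :&: A| < #|A|)].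

Lemma ext_sub (T : finType) (X S : {set T}) k :
  X \subset S -> #|X| <= k -> k <= #|S| ->
  exists C : {set T}, [/\ X \subset C, C \subset S & #|C| = k].
Proof.
move=> XS; elim: k => [|k IH] Xk kS.
- exists X; split => //; apply/eqP; rewrite -leqn0 //.
- case: (ltnP #|X| k.+1) => [Xlt|Xge].
  + have [C [XC CS Ck]] := IH Xlt (ltnW kS).
    have : C \proper S by rewrite properEcard CS Ck.
    case/properP => _ [z zS zC].
    exists (z |: C); split.
    * exact: subset_trans XC (subsetU1 _ _).
    * by rewrite subUset sub1set zS CS.
    * by rewrite cardsU1 zC Ck.
  + by exists X; split => //; apply/eqP; rewrite eqn_leq Xk Xge.
Qed.

Lemma famP (T : finType) r (A B : {set T}) :
  B \in fam r A <-> [/\ #|B| = r, exists2 z, z \in A & z \in B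
                                & exists2 z, z \in A & z \notin B].
Proof.
rewrite inE; split.
- case/andP => /eqP Br /andP [h1 h2]; split => //.
  + rewrite card_gt0 in h1; case/set0Pn: h1 => z; rewrite inE => /andP [zB zA].
    by exists z.
  + have : B :&: A \proper A by rewrite properEcard subsetIr h2.
    case/properP => _ [z zA zn]; exists z => //; apply: contra zn => zB.
    by rewrite inE zB zA.
- case=> Br [z zA zB] [w wA wB]; rewrite Br eqxx /=; apply/andP; split.
  + rewrite card_gt0; apply/set0Pn; exists z; by rewrite inE zB zA.
  + apply: proper_card; apply/properP; split; first exact: subsetIr.
    by exists w => //; rewrite inE (negbTE wB).
Qed.

Lemma swap_fam (T : finType) r (A P : {set T}) p q :
  P \in fam r A -> p \in P -> q \notin P ->
  (q \in A \/ exists2 z, z \in A & (z \in P) && (z != p)) ->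
  (p \in A \/ exists2 z, z \in A & (z \notin P) && (z != q)) ->
  (q |: (P :\ p)) \in fam r A.
Proof.
move=> /famP [Pr _ _] pP qP h1 h2; apply/famP; split.
- rewrite cardsU1 in_setD1 (negbTE qP) andbF /=.
  rewrite (cardsD1 p P) pP in Pr; rewrite -Pr //.
- case: h1 => [qA|[z zA /andP [zP zp]]].
  + by exists q => //; rewrite setU11.
  + by exists z => //; rewrite !inE zp zP orbT.
- case: h2 => [pA|[z zA /andP[zP zq]]].
  + exists p => //; rewrite !inE eqxx /= ?andbF ?orbF.
    by apply/eqP => pq; rewrite -pq pP in qP.
  + by exists z => //; rewrite !inE (negbTE zq) (negbTE zP) andbF.
Qed.

Lemma swap_out (T : finType) r (A P : {set T}) p q :
  P \in fam r A -> p \in P -> q \notin P -> p \notin A -> q \notin A ->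
  (q |: (P :\ p)) \in fam r A.
Proof.
move=> PF pP qP pA qA; have := PF; case/famP => _ [z zA zP] [w wA wP].
apply: swap_fam => //.
- right; exists z => //; rewrite zP /=; apply: contraNneq pA => <- //.
- right; exists w => //; rewrite wP /=; apply: contraNneq qA => <- //.
Qed.

Lemma swap_meas (T : finType) (P Q : {set T}) p q :
  p \in P -> p \notin Q -> q \in Q -> q \notin P ->
  #|P :&: Q| < #|(q |: (P :\ p)) :&: Q| /\ #|P :\ p| <= #|P :&: (q |: (P :\ p))|.
Proof.
move=> pP pQ qQ qP; split.
- have sub : q |: (P :&: Q) \subset (q |: (P :\ p)) :&: Q.
    apply/subsetP => z; rewrite !inE; case/orP => [/eqP->|/andP[zP zQ]].
    + by rewrite eqxx qQ.
    + rewrite zP zQ ?andbT ?orbT /=; apply/orP; right; apply: contraNneq pQ => <- //.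
  apply: leq_trans (subset_leq_card sub).
  by rewrite cardsU1 inE (negbTE qP) /= add1n.
- apply: subset_leq_card; apply/subsetP => z; rewrite !inE => /andP[zp zP].
  by rewrite zp zP orbT.
Qed.

Lemma fam_card (T : finType) r (A B : {set T}) : B \in fam r A -> #|B| = r.
Proof. by case/famP. Qed.

Lemma improve_of (T : finType) r (A P Q : {set T}) p q :
  P \in fam r A -> p \in P -> p \notin Q -> q \in Q -> q \notin P ->
  #|P :&: Q| + 2 <= r -> (q |: (P :\ p)) \in fam r A ->
  exists B, [/\ B \in fam r A, #|P :&: Q| < #|P :&: B| & #|P :&: Q| < #|B :&: Q|].
Proof.
move=> PF pP pQ qQ qP ht BF; exists (q |: (P :\ p)); split => //;
  have [h1 h2] := swap_meas pP pQ qQ qP => //.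
have := cardsD1 p P; rewrite pP (fam_card PF); lia.
Qed.

Lemma improve_side (T : finType) r (A P Q : {set T}) p q :
  P \in fam r A -> Q \in fam r A -> p \in P -> p \notin Q -> q \in Q -> q \notin P ->
  #|P :&: Q| + 2 <= r -> (q \in A -> p \in A) ->
  exists B, [/\ B \in fam r A, #|P :&: Q| < #|P :&: B| & #|P :&: Q| < #|B :&: Q|].
Proof.
move=> PF QF pP pQ qQ qP ht hA.
case pA: (p \in A); case qA: (q \in A).
- by apply: (improve_of PF pP pQ qQ qP ht); apply: swap_fam => //; left.
- case: (boolP [exists z, (z \in A) && ((z \in P) && (z != p))]).
  + case/existsP => z /andP [zA zP].
    by apply: (improve_of PF pP pQ qQ qP ht); apply: swap_fam => //; [right; exists z|left].
  + rewrite negb_exists => /forallP hz.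
    have : 0 < #|(P :\: Q) :\ p|.
      have := cardsD1 p (P :\: Q); rewrite inE pP pQ /=.
      have := cardsID Q P; rewrite (fam_card PF); lia.
    rewrite card_gt0 => /set0Pn [p2]; rewrite !inE => /and3P [p2p p2Q p2P].
    have p2A : p2 \notin A.
      by apply/negP => p2A; have := hz p2; rewrite p2A p2P p2p.
    apply: (improve_of PF p2P p2Q qQ qP ht).
    by apply: swap_out => //; rewrite qA.
- by move: (hA qA); rewrite pA.
- by apply: (improve_of PF pP pQ qQ qP ht); apply: swap_out => //; rewrite ?pA ?qA.
Qed.

Lemma improve (T : finType) r (A P Q : {set T}) :
  P \in fam r A -> Q \in fam r A -> #|P :&: Q| + 2 <= r ->
  exists B, [/\ B \in fam r A, #|P :&: Q| < #|P :&: B| & #|P :&: Q| < #|B :&: Q|].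
Proof.
move=> PF QF ht.
have : 0 < #|P :\: Q| by have := cardsID Q P; rewrite (fam_card PF); lia.
rewrite card_gt0 => /set0Pn [p]; rewrite inE => /andP [pQ pP].
have : 0 < #|Q :\: P|.
  by have := cardsID P Q; rewrite (fam_card QF) setIC; lia.
rewrite card_gt0 => /set0Pn [q]; rewrite inE => /andP [qP qQ].
case: (boolP ((q \in A) ==> (p \in A))) => [/implyP h|].
- exact: (improve_side PF QF pP pQ qQ qP ht h).
- rewrite negb_imply => /andP [qA pA].
  have [B [BF h1 h2]] : exists B, [/\ B \in fam r A, #|Q :&: P| < #|Q :&: B| & #|Q :&: P| < #|B :&: P|].
    apply: (improve_side QF PF qQ qP pP pQ); first by rewrite setIC.
    by move=> pA'; rewrite pA' in pA.
  exists B; split => //.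
  - by rewrite (setIC P Q) (setIC P B).
  - by rewrite (setIC P Q) (setIC B Q).
Qed.

Lemma neq_mem (T : finType) (S : {set T}) z w : z \in S -> w \notin S -> z != w.
Proof. by move=> zS wS; apply: contraNneq wS => <-. Qed.

Lemma disjI (T : finType) (C P : {set T}) : (forall z, z \in C -> z \notin P) -> C :&: P = set0.
Proof.
move=> h; apply/setP => z; rewrite !inE; apply/negbTE/andP => -[zC zP].
by have := h z zC; rewrite zP.
Qed.

Lemma in_fam1 (T : finType) r (A : {set T}) (F1 F2 : {set {set T}}) B :
  F1 :|: F2 = fam r A -> B \in F1 -> B \in fam r A.
Proof. by move=> <- h; rewrite inE h. Qed.

Lemma in_fam2 (T : finType) r (A : {set T}) (F1 F2 : {set {set T}}) B :
  F1 :|: F2 = fam r A -> B \in F2 -> B \in fam r A.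
Proof. by move=> <- h; rewrite inE h orbT. Qed.

Lemma fam_split (T : finType) r (A : {set T}) (F1 F2 : {set {set T}}) B :
  F1 :|: F2 = fam r A -> B \in fam r A -> B \in F1 \/ B \in F2.
Proof. by move=> <-; rewrite inE => /orP. Qed.

Lemma common (T : finType) r (A : {set T}) (F1 F2 : {set {set T}}) P Q C :
  F1 :|: F2 = fam r A -> cross_intersecting F1 F2 ->
  P \in F1 -> Q \in F2 -> C \in fam r A -> C :&: P = set0 -> C :&: Q = set0 -> False.
Proof.
move=> hU hX P1 Q2 CF CP CQ; case: (fam_split hU CF) => [C1|C2].
- by have := hX C Q C1 Q2; rewrite CQ eqxx.
- by have := hX P C P1 C2; rewrite setIC CP eqxx.
Qed.

Lemma disj1 (T : finType) r (A : {set T}) (F1 F2 : {set {set T}}) P C :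
  F1 :|: F2 = fam r A -> cross_intersecting F1 F2 ->
  P \in F1 -> C \in fam r A -> C :&: P = set0 -> C \in F1.
Proof.
move=> hU hX P1 CF CP; case: (fam_split hU CF) => // C2.
by have := hX P C P1 C2; rewrite setIC CP eqxx.
Qed.

Lemma S1 (T : finType) r (A : {set T}) (F1 F2 : {set {set T}}) (P Q S : {set T}) (a0 : T) :
  F1 :|: F2 = fam r A -> cross_intersecting F1 F2 -> 2 * r + 1 <= #|T| ->
  P \in F1 -> Q \in F2 -> P :|: Q \subset S -> #|S| <= r.+1 ->
  a0 \in A -> a0 \notin S -> False.
Proof.
move=> hU hX hm P1 Q2 PQS cS a0A a0S.
have PF := in_fam1 hU P1; have QF := in_fam2 hU Q2.
have := PF; case/famP => Pr [z zA zP] _.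
have r0 : 0 < r by rewrite -Pr card_gt0; apply/set0Pn; exists z.
have cW : r <= #|~: S| by have := cardsC S; lia.
have h1 : [set a0] \subset ~: S by rewrite sub1set inE a0S.
have h2 : #|[set a0]| <= r by rewrite cards1.
have [C [aC CW Cr]] := ext_sub h1 h2 cW.
have CS : forall Y : {set T}, Y \subset S -> C :&: Y = set0.
  move=> Y YS; apply: disjI => u uC; apply/negP => uY.
  by have := subsetP CW u uC; rewrite inE (subsetP YS u uY).
apply: (common hU hX P1 Q2 (C := C)).
- apply/famP; split => //; first by exists a0 => //; rewrite sub1set in aC.
  exists z => //; apply/negP => zC.
  by have := subsetP CW z zC; rewrite inE (subsetP PQS) // inE zP.
- by apply: CS; apply: subset_trans PQS; apply: subsetUl.
- by apply: CS; apply: subset_trans PQS; apply: subsetUr.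
Qed.

Lemma last_case (T : finType) r (A : {set T}) (F1 F2 : {set {set T}}) (P Q : {set T}) :
  F1 :|: F2 = fam r A -> cross_intersecting F1 F2 -> 2 * r + 1 <= #|T| ->
  2 <= r -> (#|A| = r.-1 \/ #|A| = r) ->
  P \in F1 -> Q \in F2 -> #|P :&: Q| = r.-1 -> False.
Proof.
move=> hU hX hm hr hA P1 Q2 ht.
have PF := in_fam1 hU P1; have QF := in_fam2 hU Q2.
have Pr := fam_card PF; have Qr := fam_card QF.
have cPQ : #|P :|: Q| = r.+1 by rewrite cardsU Pr Qr ht; lia.
have : #|P :\: Q| == 1 by have := cardsID Q P; rewrite Pr ht; lia.
case/cards1P => x Px.
have : #|Q :\: P| == 1 by have := cardsID P Q; rewrite Qr setIC ht; lia.
case/cards1P => y Qy.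
have : x \in P :\: Q by rewrite Px set11.
rewrite inE => /andP [xQ xP].
have : y \in Q :\: P by rewrite Qy set11.
rewrite inE => /andP [yP yQ].
have mem : forall z, z \in P :|: Q -> z != x -> z != y -> z \in P :&: Q.
  move=> z; rewrite !inE => /orP [zP|zQ] zx zy.
  - case zQ: (z \in Q); first by rewrite zP.
    have : z \in P :\: Q by rewrite inE zQ zP.
    by rewrite Px inE (negbTE zx).
  - case zP: (z \in P); first by rewrite zQ.
    have : z \in Q :\: P by rewrite inE zQ zP.
    by rewrite Qy inE (negbTE zy).
case: (boolP (A \subset P :|: Q)) => [AS | /subsetPn [a0 a0A a0n]]; last first.
  by apply: (S1 hU hX hm P1 Q2 (subxx _) _ a0A a0n); rewrite cPQ.
have xA : x \in A.
  have := QF; case/famP => _ _ [z zA zQ].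
  have : z \in P :\: Q by rewrite inE zQ; have := subsetP AS z zA; rewrite inE (negbTE zQ) orbF.
  by rewrite Px inE => /eqP <-.
have yA : y \in A.
  have := PF; case/famP => _ _ [z zA zP].
  have : z \in Q :\: P by rewrite inE zP; have := subsetP AS z zA; rewrite inE (negbTE zP).
  by rewrite Qy inE => /eqP <-.
have xy : x != y by apply: neq_mem xP yP.
have cW : r <= #|~: (P :|: Q)| by have := cardsC (P :|: Q); lia.
have : 0 < #|~: (P :|: Q)| by lia.
rewrite card_gt0 => /set0Pn [w]; rewrite !inE negb_or => /andP [wP wQ].
case: (ltnP 2 #|A|) => [A3|A2].
- have : ~~ (A \subset [set x; y]).
    by apply/negP => /subset_leq_card; rewrite cards2 xy; rewrite leqNgt A3.
  case/subsetPn => z zA; rewrite !inE negb_or => /andP [zx zy].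
  have zPQ : z \in P :&: Q by apply: mem => //; apply: (subsetP AS).
  set B3 := w |: (P :&: Q).
  have B3F : B3 \in fam r A.
    apply/famP; split.
    + by rewrite cardsU1 inE (negbTE wP) /= ht add1n prednK // (ltnW hr).
    + by exists z => //; rewrite inE zPQ orbT.
    + exists x => //; rewrite !inE (negbTE xQ) andbF orbF.
      exact: neq_mem xP wP.
  case: (fam_split hU B3F) => [B1|B2].
  + apply: (S1 hU hX hm B1 Q2 (S := w |: Q) _ _ xA).
    * rewrite subUset subsetU1 andbT; apply/subsetP => u; rewrite !inE.
      by case/orP => [->|/andP [_ ->]]; rewrite ?orbT.
    * by rewrite cardsU1 Qr; case: (w \notin Q).
    * by rewrite !inE negb_or xQ andbT; apply: neq_mem xP wP.
  + apply: (S1 hU hX hm P1 B2 (S := w |: P) _ _ yA).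
    * rewrite subUset subsetU1 /=; apply/subsetP => u; rewrite !inE.
      by case/orP => [->|/andP [-> _]]; rewrite ?orbT.
    * by rewrite cardsU1 Pr; case: (w \notin P).
    * by rewrite !inE negb_or yP andbT; apply: neq_mem yQ wQ.
- have cA2 : #|A| = 2.
    apply/eqP; rewrite eqn_leq A2 /=.
    by have := subset_leq_card (_ : [set x; y] \subset A); rewrite cards2 xy; apply; rewrite subUset !sub1set xA yA.
  have yw : y != w by apply: neq_mem yQ wQ.
  have xw : x != w by apply: neq_mem xP wP.
  have : r = 2 \/ r = 3 by move: hr hA; rewrite cA2; clear; lia.
  case=> er.
  + set C := y |: [set w].
    have CF : C \in fam r A.
      apply/famP; split.
      * by rewrite cardsU1 cards1 inE yw er.
      * by exists y => //; rewrite setU11.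
      * by exists x => //; rewrite !inE negb_or xy.
    have C1 : C \in F1.
      apply: (disj1 hU hX P1 CF); apply: disjI => u; rewrite !inE.
      by case/orP => /eqP ->.
    apply: (S1 hU hX hm C1 Q2 (S := w |: Q) _ _ xA).
    * rewrite subUset subsetU1 andbT subUset sub1set inE yQ orbT /=.
      by rewrite sub1set !inE eqxx.
    * by rewrite cardsU1 Qr; case: (w \notin Q).
    * by rewrite !inE negb_or xQ andbT.
  + have : 0 < #|P :&: Q| by rewrite ht er.
    rewrite card_gt0 => /set0Pn [i]; rewrite inE => /andP [iP iQ].
    have h0 : set0 \subset ~: (P :|: Q) by apply: sub0set.
    have h1 : #|@set0 T| <= 2 by rewrite cards0.
    have h2 : 2 <= #|~: (P :|: Q)| by apply: leq_trans cW; rewrite er.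
    have [C0 [_ C0W C02]] := ext_sub h0 h1 h2.
    move/eqP: C02 => /cards2P [w1 [w2 [w12 C0e]]].
    have : w1 \in ~: (P :|: Q) by apply: (subsetP C0W); rewrite C0e !inE eqxx.
    rewrite !inE negb_or => /andP [w1P w1Q].
    have : w2 \in ~: (P :|: Q) by apply: (subsetP C0W); rewrite C0e !inE eqxx orbT.
    rewrite !inE negb_or => /andP [w2P w2Q].
    set C := y |: [set w1; w2].
    set D := y |: [set w1; i].
    have yw1 : y != w1 by apply: neq_mem yQ w1Q.
    have yw2 : y != w2 by apply: neq_mem yQ w2Q.
    have yi : y != i by rewrite eq_sym; apply: neq_mem iP yP.
    have xi : x != i by rewrite eq_sym; apply: neq_mem iQ xQ.
    have xw1 : x != w1 by apply: neq_mem xP w1P.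
    have xw2 : x != w2 by apply: neq_mem xP w2P.
    have w1i : w1 != i by rewrite eq_sym; apply: neq_mem iP w1P.
    have CF : C \in fam r A.
      apply/famP; split.
      * by rewrite cardsU1 cards2 w12 !inE negb_or yw1 yw2 er.
      * by exists y => //; rewrite setU11.
      * by exists x => //; rewrite !inE !negb_or xy xw1 xw2.
    have DF : D \in fam r A.
      apply/famP; split.
      * by rewrite cardsU1 cards2 w1i !inE negb_or yw1 yi er.
      * by exists y => //; rewrite setU11.
      * by exists x => //; rewrite !inE !negb_or xy xw1 xi.
    have C1 : C \in F1.
      apply: (disj1 hU hX P1 CF); apply: disjI => u; rewrite !inE.
      by case/orP => [|/orP []] /eqP ->.
    case: (fam_split hU DF) => [D1|D2].
    * apply: (S1 hU hX hm D1 Q2 (S := w1 |: Q) _ _ xA).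
      - apply/subsetP => u; rewrite !inE.
        by case/orP => [/orP [|/orP []]|] => [/eqP ->|/eqP ->|/eqP ->|->]; rewrite ?eqxx ?yQ ?iQ ?orbT.
      - by rewrite cardsU1 Qr er; case: (w1 \notin Q).
      - by rewrite !inE negb_or xQ andbT.
    * apply: (S1 hU hX hm C1 D2 (S := w2 |: D) _ _ xA).
      - apply/subsetP => u; rewrite !inE.
        by case/orP => [/orP [|/orP []]|/orP [|/orP []]] => /eqP ->; rewrite ?eqxx ?orbT.
      - rewrite cardsU1 (fam_card DF) er; by case: (w2 \notin D).
      - by rewrite !inE !negb_or xy xw1 xi xw2.
Qed.

Lemma step (T : finType) r (A : {set T}) (F1 F2 : {set {set T}}) (P Q : {set T}) :
  F1 :|: F2 = fam r A -> F1 :&: F2 = set0 -> cross_intersecting F1 F2 ->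
  2 * r + 1 <= #|T| -> 2 <= r -> (#|A| = r.-1 \/ #|A| = r) ->
  (forall P' Q', #|P :&: Q| < #|P' :&: Q'| -> P' \in F1 -> Q' \in F2 -> False) ->
  P \in F1 -> Q \in F2 -> False.
Proof.
move=> hU hI hX hm hr hA IH P1 Q2.
have PF := in_fam1 hU P1; have QF := in_fam2 hU Q2.
have Pr := fam_card PF; have Qr := fam_card QF.
have tle : #|P :&: Q| <= r by rewrite -Pr; apply: subset_leq_card; apply: subsetIl.
case: (ltnP #|P :&: Q| r.-1) => [tlt|tge].
- have ht : #|P :&: Q| + 2 <= r by move: tlt hr; clear; lia.
  have [B [BF h1 h2]] := improve PF QF ht.
  case: (fam_split hU BF) => [B1|B2].
  + exact: (IH B Q h2 B1 Q2).
  + exact: (IH P B h1 P1 B2).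
- case: (ltnP #|P :&: Q| r) => [tr|tr].
  + apply: (last_case hU hX hm hr hA P1 Q2).
    by move: tr tge; clear; lia.
  + have ePQ : P :&: Q = P.
      apply/eqP; rewrite eqEcard subsetIl Pr /=; move: tr tle; clear; lia.
    have ePQ' : P = Q.
      apply/eqP; rewrite eqEcard Pr Qr leqnn andbT; rewrite -ePQ; apply: subsetIr.
    have : P \in F1 :&: F2 by rewrite inE P1 ePQ' Q2.
    by rewrite hI inE.
Qed.

Lemma main_ind (T : finType) r (A : {set T}) (F1 F2 : {set {set T}}) n :
  F1 :|: F2 = fam r A -> F1 :&: F2 = set0 -> cross_intersecting F1 F2 ->
  2 * r + 1 <= #|T| -> 2 <= r -> (#|A| = r.-1 \/ #|A| = r) ->
  forall P Q : {set T}, r - #|P :&: Q| <= n -> P \in F1 -> Q \in F2 -> False.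
Proof.
move=> hU hI hX hm hr hA; elim: n => [|n IHn] P Q hn P1 Q2;
  apply: (step hU hI hX hm hr hA _ P1 Q2) => P' Q' lt P1' Q2'.
- have := fam_card (in_fam1 hU P1').
  have : #|P' :&: Q'| <= #|P'| by apply: subset_leq_card; apply: subsetIl.
  move: hn lt; clear; lia.
- apply: (IHn P' Q') => //; move: hn lt; clear; lia.
Qed.

Theorem proposition3p3 (T : finType) (r : nat) (A : {set T}) :
  2 <= r ->
  2 * r + 1 <= #|T| ->
  (#|A| = r.-1 \/ #|A| = r) ->
  non_separable [set B : {set T} | (#|B| == r) && (0 < #|B :&: A| < #|A|)].
Proof.
move=> hr hm hA F1 F2 hU hI hX.
case: (set_0Vmem F1) => [->|[P P1]]; first by left.
case: (set_0Vmem F2) => [->|[Q Q2]]; first by right.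
exfalso; exact: (main_ind (n := r) hU hI hX hm hr hA (P := P) (Q := Q) (leq_subr _ _) P1 Q2).
Qed.
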